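(* Let $K$ be a commutative ring with identity, $n\ge 0$, and let $A,D$ be $K$-algebras. (i) If $D$ is a retract of $A$, i.e. there are $K$-algebra homomorphisms $\kappa:A\to D$, $\theta:D\to A$ with $\kappa\theta=\mathrm{id}_D$, and $A$ is bi-$FP_n$, then $D$ is bi-$FP_n$. (ii) Suppose $A$ and $D$ have augmentations $\varepsilon:A\to K$, $\varepsilon_D:D\to K$, and $D$ is an augmented retract of $A$, i.e. there exist $\kappa,\theta$ as in (i) with additionally $\varepsilon_D\kappa=\varepsilon$. If $A$ is left-$FP_n$ (resp. right-$FP_n$, weak bi-$FP_n$), then so is $D$.
   Context: An augmentation of a $K$-algebra is a $K$-algebra epimorphism onto $K$. A module is of type $FP_n$ if there is an exact sequence $0\leftarrow M\leftarrow P_0\leftarrow\cdots\leftarrow P_n$ with $P_0,\dots,P_n$ finitely generated free modules. For an augmented algebra $A$, left-$FP_n$ (resp. right-$FP_n$) means $K$ as a left (resp. right) $A$-module via the augmentation is of type $FP_n$. An $(A,A)$-bimodule is an abelian group with left and right $A$-actions satisfying $(am)b=a(mb)$ and $km=mk$ for $k\in K$; a free bimodule of rank $r$ is a direct sum of $r$ copies of $A\otimes_K A$ with action $a(u\otimes v)b=au\otimes vb$. $A$ is weak bi-$FP_n$ if $K$ as a bimodule via $a\cdot k\cdot a'=\varepsilon(a)k\varepsilon(a')$ has a partial resolution $0\leftarrow K\leftarrow F_0\leftarrow\cdots\leftarrow F_n$ by finitely generated free bimodules; $A$ is bi-$FP_n$ if $A$ as a bimodule by left and right multiplication has such a partial resolution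 $0\leftarrow A\leftarrow F_0\leftarrow\cdots\leftarrow F_n$. *)

(* Defs.v *)
From HB Require Import structures.
From mathcomp Require Import all_boot all_algebra.
Set Implicit Arguments. Unset Strict Implicit. Unset Printing Implicit Defensive.
Import GRing.Theory.
Local Open Scope ring_scope.

Definition left_linear (R : pzRingType) (M N : zmodType)
    (actM : R -> M -> M) (actN : R -> N -> N) (f : M -> N) : Prop :=
  (forall x y, f (x + y) = f x + f y) /\ (forall a x, f (actM a x) = actN a (f x)).

(** The free left [R]-module of rank [m] is the row space ['rV[R]_m] with
    [a *: v] (entrywise left multiplication by [a]). *)
Definition left_FPn (R : pzRingType) (n : nat) (M : zmodType)
    (act : R -> M -> M) : Prop :=
  exists (m : nat -> nat) (d : forall i : nat, 'rV[R]_(m i.+1) -> 'rV[R]_(m i))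
         (g : 'rV[R]_(m 0%N) -> M),
    [/\ left_linear ( *:%R) act g,
        (forall i, (i < n)%N -> left_linear ( *:%R) ( *:%R) (d i)),
        (forall x : M, exists v, g v = x),
        ((0 < n)%N -> forall v, g v = 0 <-> exists w, d 0%N w = v) &
        (forall i, (i.+1 < n)%N ->
           forall v : 'rV[R]_(m i.+1), d i v = 0 <-> exists w, d i.+1 w = v)].

Definition augmentation (K : comNzRingType) (A : algType K)
    (eps : {lrmorphism A -> K^o}) : Prop :=
  forall k : K, exists a : A, eps a = k.

Definition leftFPn (K : comNzRingType) (A : algType K)
    (eps : {lrmorphism A -> K^o}) (n : nat) : Prop :=
  @left_FPn A n K (fun a k => (eps a : K) * k).

(** A right A-module is a left module over the converse ring A^c
    (a *_{A^c} b = b * a); the free right module A^m is ['rV[A^c]_m], on which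
    [a *: v] multiplies every entry of [v] on the right by [a]. *)
Definition rightFPn (K : comNzRingType) (A : algType K)
    (eps : {lrmorphism A -> K^o}) (n : nat) : Prop :=
  @left_FPn A^c n K (fun (a : A^c) (k : K) => k * (eps (a : A) : K)).

Definition is_bimodule (K : comNzRingType) (A : algType K) (M : zmodType)
    (l : A -> M -> M) (r : M -> A -> M) : Prop :=
  ((forall a x y, l a (x + y) = l a x + l a y) /\
   (forall a b x, l (a + b) x = l a x + l b x) /\
   (forall a b x, l (a * b) x = l a (l b x)) /\
   (forall x, l 1 x = x)) /\
  ((forall a x y, r (x + y) a = r x a + r y a) /\
   (forall a b x, r x (a + b) = r x a + r x b) /\
   (forall a b x, r x (a * b) = r (r x a) b) /\
   (forall x, r x 1 = x)) /\
  (forall a b x, r (l a x) b = l a (r x b)) /\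
  (forall (k : K) x, l (k%:A) x = r x (k%:A)).

Definition bimod_hom (K : comNzRingType) (A : algType K) (M N : zmodType)
    (lM : A -> M -> M) (rM : M -> A -> M) (lN : A -> N -> N) (rN : N -> A -> N)
    (f : M -> N) : Prop :=
  [/\ (forall x y, f (x + y) = f x + f y),
      (forall a x, f (lM a x) = lN a (f x)) &
      (forall a x, f (rM x a) = rN (f x) a)].

(** (F, l, r) is a free bimodule of rank [rk]: it is a bimodule with elements
    e_0, ..., e_(rk-1) that freely generate it, i.e. for every bimodule N and
    every family n_0, ..., n_(rk-1) of elements of N there is a unique bimodule
    homomorphism F -> N with e_i |-> n_i.  (This is the universal property of
    the direct sum of rk copies of A (x)_K A, with e_i = 1 (x) 1 in the i-th
    summand; it determines F up to isomorphism.) *)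
Definition free_bimodule (K : comNzRingType) (A : algType K) (F : zmodType)
    (l : A -> F -> F) (r : F -> A -> F) (rk : nat) : Prop :=
  is_bimodule l r /\
  exists e : 'I_rk -> F,
    forall (N : zmodType) (lN : A -> N -> N) (rN : N -> A -> N),
      is_bimodule lN rN ->
      forall nv : 'I_rk -> N,
        exists f : F -> N,
          [/\ bimod_hom l r lN rN f,
              (forall i, f (e i) = nv i) &
              (forall f' : F -> N, bimod_hom l r lN rN f' ->
                 (forall i, f' (e i) = nv i) -> forall x, f' x = f x)].

Definition bimod_FPn (K : comNzRingType) (A : algType K) (n : nat)
    (M : zmodType) (lM : A -> M -> M) (rM : M -> A -> M) : Prop :=
  exists (F : nat -> zmodType) (lF : forall i, A -> F i -> F i)
         (rF : forall i, F i -> A -> F i)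
         (d : forall i : nat, F i.+1 -> F i) (g : F 0%N -> M),
    (forall i, (i <= n)%N -> exists rk, free_bimodule (lF i) (rF i) rk) /\
    [/\ bimod_hom (lF 0%N) (rF 0%N) lM rM g,
        (forall i, (i < n)%N ->
           bimod_hom (lF i.+1) (rF i.+1) (lF i) (rF i) (d i)),
        (forall x : M, exists v, g v = x),
        ((0 < n)%N -> forall v, g v = 0 <-> exists w, d 0%N w = v) &
        (forall i, (i.+1 < n)%N ->
           forall v : F i.+1, d i v = 0 <-> exists w, d i.+1 w = v)].

Definition biFPn (K : comNzRingType) (A : algType K) (n : nat) : Prop :=
  @bimod_FPn K A n A (fun a x => a * x) (fun x b => x * b).

Definition weak_biFPn (K : comNzRingType) (A : algType K)
    (eps : {lrmorphism A -> K^o}) (n : nat) : Prop :=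
  @bimod_FPn K A n K (fun a k => (eps a : K) * k) (fun k a => k * (eps a : K)).

(* Main.v *)
Require Import Defs.
From HB Require Import structures.
From mathcomp Require Import all_boot all_algebra.
From Stdlib Require Import IndefiniteDescription.
Set Implicit Arguments. Unset Strict Implicit. Unset Printing Implicit Defensive.
Import GRing.Theory.
Local Open Scope ring_scope.

Section Upd.
Variable T : nat -> Type.
Definition upd (f : forall i, T i) (j : nat) (x : T j) : forall i, T i :=
  fun i => match i =P j with ReflectT e => eq_rect_r T x e | ReflectF _ => f i end.
Arguments upd : clear implicits.
Lemma upd_eq f j x : upd f j x j = x.
Proof. rewrite /upd; case: eqP => // e; by rewrite (eq_axiomK e). Qed.
Lemma upd_neq f j x i : i <> j -> upd f j x i = f i.
Proof. by rewrite /upd; case: eqP. Qed.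
End Upd.
Arguments upd {T} f j x i.
Arguments upd_eq {T} f j x.
Arguments upd_neq {T} f j x i.

Section Abstract.
Variable Act : zmodType -> Type.
Variable ismod : forall M : zmodType, Act M -> Prop.
Variable hom : forall M N : zmodType, Act M -> Act N -> (M -> N) -> Prop.
Variable FF : forall M : zmodType, Act M -> Prop.
Variable actP : forall M1 M2 : zmodType, Act M1 -> Act M2 -> Act (M1 * M2)%type.
Arguments ismod {M}.
Arguments hom {M N}.
Arguments FF {M}.
Arguments actP {M1 M2}.

Hypothesis homD : forall M N (aM : Act M) (aN : Act N) f, hom aM aN f ->
  forall x y, f (x + y) = f x + f y.
Hypothesis hom_id : forall M (aM : Act M), hom aM aM id.
Hypothesis hom_comp : forall M N P (aM : Act M) (aN : Act N) (aP : Act P) f g,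
  hom aM aN f -> hom aN aP g -> hom aM aP (g \o f).
Hypothesis hom_add : forall M N (aM : Act M) (aN : Act N) f g, ismod aN ->
  hom aM aN f -> hom aM aN g -> hom aM aN (fun x => f x + g x).
Hypothesis hom_opp : forall M N (aM : Act M) (aN : Act N) f, ismod aN ->
  hom aM aN f -> hom aM aN (fun x => - f x).
Hypothesis hom0 : forall M N (aM : Act M) (aN : Act N), ismod aN ->
  hom aM aN (fun _ => 0).
Hypothesis FF_mod : forall M (aM : Act M), FF aM -> ismod aM.
Hypothesis FF_proj : forall F X Y (aF : Act F) (aX : Act X) (aY : Act Y) s f,
  FF aF -> ismod aX -> ismod aY -> hom aX aY s -> hom aF aY f ->
  (forall u, exists x, s x = f u) ->
  exists a, hom aF aX a /\ forall u, s (a u) = f u.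
Hypothesis FF_prod : forall M1 M2 (a1 : Act M1) (a2 : Act M2),
  FF a1 -> FF a2 -> FF (actP a1 a2).
Hypothesis hom_fst : forall M1 M2 (a1 : Act M1) (a2 : Act M2),
  hom (actP a1 a2) a1 fst.
Hypothesis hom_snd : forall M1 M2 (a1 : Act M1) (a2 : Act M2),
  hom (actP a1 a2) a2 snd.

Lemma hom_0 M N (aM : Act M) (aN : Act N) f : hom aM aN f -> f 0 = 0.
Proof.
move=> hf; have := homD hf 0 0; rewrite addr0 => e.
by apply/eqP; rewrite -(subrr (f 0)) {2}e addrK.
Qed.

Lemma hom_N M N (aM : Act M) (aN : Act N) f : hom aM aN f -> forall x, f (- x) = - f x.
Proof.
move=> hf x; apply/eqP; rewrite -subr_eq0 opprK -(homD hf) addNr.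
by rewrite (hom_0 hf).
Qed.

Lemma hom_B M N (aM : Act M) (aN : Act N) f : hom aM aN f -> forall x y, f (x - y) = f x - f y.
Proof. by move=> hf x y; rewrite (homD hf) (hom_N hf). Qed.

Lemma hom_sub M N (aM : Act M) (aN : Act N) f g : ismod aN ->
  hom aM aN f -> hom aM aN g -> hom aM aN (fun x => f x - g x).
Proof. by move=> mN hf hg; apply: hom_add => //; apply: hom_opp. Qed.

Definition ker_at (X : nat -> zmodType) (NX : zmodType)
  (dX : forall i, X i.+1 -> X i) (gX : X 0%N -> NX) (i : nat) : X i -> Prop :=
  match i return X i -> Prop with
  | 0 => fun v => gX v = 0
  | i'.+1 => fun v => dX i' v = 0
  end.

Definition exct X NX dX gX (j : nat) :=
  forall i, (i < j)%N -> forall v, @ker_at X NX dX gX i v -> exists w, dX i w = v.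
Definition cplx X NX dX gX (j : nat) :=
  forall i, (i < j)%N -> forall w, @ker_at X NX dX gX i (dX i w).

Lemma exct_le X NX dX gX j j' : (j' <= j)%N -> @exct X NX dX gX j -> exct dX gX j'.
Proof. by move=> le e i lt; apply: e; apply: leq_trans le. Qed.
Lemma cplx_le X NX dX gX j j' : (j' <= j)%N -> @cplx X NX dX gX j -> cplx dX gX j'.
Proof. by move=> le e i lt; apply: e; apply: leq_trans le. Qed.

Lemma chain_ker (X Y : nat -> zmodType) (NX NY : zmodType) (aX : forall i, Act (X i)) (aY : forall i, Act (Y i))
   dX (gX : X 0%N -> NX) dY (gY : Y 0%N -> NY) (f : forall i, X i -> Y i) j :
  (forall i, (i <= j)%N -> hom (aX i) (aY i) (f i)) ->
  (forall v, gX v = 0 -> gY (f 0%N v) = 0) ->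
  (forall i, (i < j)%N -> forall u, dY i (f i.+1 u) = f i (dX i u)) ->
  forall i, (i <= j)%N -> forall v, ker_at dX gX v -> ker_at dY gY (f i v).
Proof.
move=> hf h0 hc [|i] hi v /=; first exact: h0.
by move=> kv; rewrite hc // kv (hom_0 (hf i _)) // ltnW.
Qed.

Lemma compare (X Y : nat -> zmodType) (NX NY : zmodType) (aX : forall i, Act (X i)) (aY : forall i, Act (Y i))
   (aNY : Act NY) dX (phi : X 0%N -> NY) dY (gY : Y 0%N -> NY) (j : nat) :
  (forall i, (i <= j)%N -> FF (aX i)) ->
  (forall i, (i <= j)%N -> ismod (aY i)) -> ismod aNY ->
  (forall i, (i < j)%N -> hom (aX i.+1) (aX i) (dX i)) ->
  (forall i, (i < j)%N -> hom (aY i.+1) (aY i) (dY i)) ->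
  hom (aY 0%N) aNY gY -> hom (aX 0%N) aNY phi ->
  @cplx X NY dX phi j -> @exct Y NY dY gY j ->
  (forall u, exists y, gY y = phi u) ->
  exists f : forall i, X i -> Y i,
    [/\ forall i, (i <= j)%N -> hom (aX i) (aY i) (f i),
        forall u, gY (f 0%N u) = phi u &
        forall i, (i < j)%N -> forall u, dY i (f i.+1 u) = f i (dX i u)].
Proof.
move=> FX mY mNY hdX hdY hgY hphi cX eY base.
suff: forall j', (j' <= j)%N -> exists f : forall i, X i -> Y i,
    [/\ forall i, (i <= j')%N -> hom (aX i) (aY i) (f i),
        forall u, gY (f 0%N u) = phi u &
        forall i, (i < j')%N -> forall u, dY i (f i.+1 u) = f i (dX i u)].
  by apply.
elim=> [|k IH] hk.
  have [a0 [ha0 ea0]] := FF_proj (FX 0%N isT) (mY 0%N isT) mNY hgY hphi base.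
  exists (@upd (fun i => X i -> Y i) (fun i (_ : X i) => (0 : Y i)) 0%N a0).
  split=> //; first by case=> // _; rewrite upd_eq.
  by move=> u; rewrite upd_eq.
have [f [hf ef cf]] := IH (ltnW hk).
have kf : forall u, ker_at dY gY (f k (dX k u)).
  move=> u; apply: (@chain_ker X Y NY NY aX aY dX phi dY gY f k hf _ cf k (leqnn k) (dX k u) (cX k hk u)).
  by move=> v e; rewrite ef e.
have [a [ha ea]] := FF_proj (FX k.+1 hk) (mY k.+1 hk) (mY k (ltnW hk)) (hdY k hk)
   (hom_comp (hdX k hk) (hf k (leqnn k))) (fun u => eY k hk _ (kf u)).
exists (@upd (fun i => X i -> Y i) f k.+1 a); split.
- move=> i hi; case: (eqVneq i k.+1) => [->|ne]; first by rewrite upd_eq.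
  rewrite upd_neq; last by apply/eqP.
  by apply: hf; rewrite leq_eqVlt ltnS in hi; case/orP: hi ne => [/eqP->|]; rewrite ?eqxx.
- by move=> u; rewrite upd_neq.
- move=> i hi u; rewrite (@upd_neq _ _ _ _ i); last by move=> e; rewrite e ltnn in hi.
  case: (eqVneq i k) => [e|ne].
    by subst i; rewrite upd_eq ea.
  rewrite upd_neq; last by move=> [e]; rewrite e eqxx in ne.
  apply: cf; rewrite ltnS leq_eqVlt in hi; by case/orP: hi ne => [/eqP->|]; rewrite ?eqxx.
Qed.


Definition hd (X : nat -> zmodType) (dX : forall i, X i.+1 -> X i)
  (h : forall i, X i -> X i.+1) (i : nat) : X i -> X i :=
  match i return X i -> X i with
  | 0 => fun _ => 0
  | i'.+1 => fun v => h i' (dX i' v)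
  end.

Lemma hd_ker (X : nat -> zmodType) (NX : zmodType) (aX : forall i, Act (X i))
  dX (gX : X 0%N -> NX) h i (y : X i) :
  (forall i', (i' < i)%N -> hom (aX i') (aX i'.+1) (h i')) ->
  ker_at dX gX y -> hd dX h y = 0.
Proof.
by case: i y => [|i] y //= hh ->; rewrite (hom_0 (hh i _)).
Qed.

Lemma hd_hom (X : nat -> zmodType) (aX : forall i, Act (X i)) dX h i :
  ismod (aX i) ->
  (forall i', (i' < i)%N -> hom (aX i') (aX i'.+1) (h i')) ->
  (forall i', (i' < i)%N -> hom (aX i'.+1) (aX i') (dX i')) ->
  hom (aX i) (aX i) (hd dX h (i:=i)).
Proof.
case: i => [|i] /= m hh hd'; first exact: hom0.
exact: (hom_comp (hd' i _) (hh i _)).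
Qed.

Lemma psi_ker (X : nat -> zmodType) (NX : zmodType) (aX : forall i, Act (X i))
  (aNX : Act NX) dX (gX : X 0%N -> NX) (gam : forall i, X i -> X i) h j :
  hom (aX 0%N) aNX gX ->
  (forall i, (i < j)%N -> hom (aX i.+1) (aX i) (dX i)) ->
  (forall i, (i < j)%N -> hom (aX i) (aX i.+1) (h i)) ->
  cplx dX gX j ->
  (forall u, gX (gam 0%N u) = gX u) ->
  (forall i, (i < j)%N -> forall u, dX i (gam i.+1 u) = gam i (dX i u)) ->
  (forall i, (i < j)%N -> forall v, v - gam i v - hd dX h v = dX i (h i v)) ->
  forall u : X j, ker_at dX gX (u - gam j u - hd dX h u).
Proof.
case: j => [|j] hg hdX hh cX g0 cg ht u /=.
  by rewrite !(hom_B hg) g0 (hom_0 hg) !subrr ?subr0.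
rewrite !(hom_B (hdX j _)) // -ht // cg //.
rewrite (hd_ker (aX := aX) (gX := gX)) ?subr0 ?subrr //.
- by move=> i hi; apply: hh; apply: ltn_trans hi _.
- by apply: cX.
Qed.

Lemma homotopy (X : nat -> zmodType) (NX : zmodType) (aX : forall i, Act (X i))
  (aNX : Act NX) dX (gX : X 0%N -> NX) (gam : forall i, X i -> X i) j :
  (forall i, (i < j)%N -> FF (aX i)) -> (forall i, (i <= j)%N -> ismod (aX i)) ->
  hom (aX 0%N) aNX gX ->
  (forall i, (i < j)%N -> hom (aX i.+1) (aX i) (dX i)) ->
  (forall i, (i < j)%N -> hom (aX i) (aX i) (gam i)) ->
  cplx dX gX j -> exct dX gX j ->
  (forall u, gX (gam 0%N u) = gX u) ->
  (forall i, (i < j)%N -> forall u, dX i (gam i.+1 u) = gam i (dX i u)) ->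
  exists h : forall i, X i -> X i.+1,
    (forall i, (i < j)%N -> hom (aX i) (aX i.+1) (h i)) /\
    (forall i, (i < j)%N -> forall v, v - gam i v - hd dX h v = dX i (h i v)).
Proof.
move=> FX mX hg hdX hgam cX eX g0 cg.
suff: forall j', (j' <= j)%N -> exists h : forall i, X i -> X i.+1,
    (forall i, (i < j')%N -> hom (aX i) (aX i.+1) (h i)) /\
    (forall i, (i < j')%N -> forall v, v - gam i v - hd dX h v = dX i (h i v)).
  by apply.
elim=> [|k IH] hk.
  by exists (fun i (_ : X i) => (0 : X i.+1)).
have [h [hh eh]] := IH (ltnW hk).
have hw : hom (aX k) (aX k) (fun v => v - gam k v - hd dX h v).
  apply: hom_sub; first by apply: mX; apply: ltnW.
    by apply: hom_sub; [apply: mX; apply: ltnW| exact: hom_id | exact: hgam].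
  apply: hd_hom => //; first by apply: mX; apply: ltnW.
  by move=> i hi; apply: hdX; apply: ltn_trans hk.
have kw : forall v, ker_at dX gX (v - gam k v - hd dX h v).
  apply: (psi_ker (aX := aX) hg) => //.
  - by move=> i hi; apply: hdX; apply: ltn_trans hk.
  - by apply: (cplx_le _ cX); apply: ltnW.
  - by move=> i hi; apply: cg; apply: ltn_trans hk.
have [a [ha ea]] := FF_proj (FX k hk) (mX k.+1 hk) (mX k (ltnW hk)) (hdX k hk) hw
   (fun u => eX k hk _ (kw u)).
exists (@upd (fun i => X i -> X i.+1) h k a); split.
- move=> i hi; case: (eqVneq i k) => [->|ne]; first by rewrite upd_eq.
  rewrite upd_neq; last by apply/eqP.
  by apply: hh; rewrite ltnS leq_eqVlt in hi; case/orP: hi ne => [/eqP->|]; rewrite ?eqxx.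
- have hdE : forall i (v : X i), (i <= k)%N -> hd dX (@upd (fun i => X i -> X i.+1) h k a) v = hd dX h v.
    by case=> [|i] v //= hi; rewrite upd_neq // => e; rewrite e ltnn in hi.
  move=> i hi v; rewrite hdE; last by rewrite -ltnS.
  case: (eqVneq i k) => [e|ne]; first by subst i; rewrite upd_eq ea.
  rewrite upd_neq; last by apply/eqP.
  by apply: eh; rewrite ltnS leq_eqVlt in hi; case/orP: hi ne => [/eqP->|]; rewrite ?eqxx.
Qed.


Fixpoint Qt (C : nat -> zmodType) (i : nat) : zmodType :=
  match i with 0 => C 0%N | i'.+1 => (Qt C i' * C i'.+1)%type end.
Fixpoint aQt (C : nat -> zmodType) (aC : forall i, Act (C i)) (i : nat) : Act (Qt C i) :=
  match i return Act (Qt C i) with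
  | 0 => aC 0%N
  | i'.+1 => actP (aQt aC i') (aC i'.+1)
  end.

Lemma cplx_comp (X : nat -> zmodType) (NX NY : zmodType) (aNX : Act NX) (aNY : Act NY)
   dX (gX : X 0%N -> NX) (s : NX -> NY) j :
  hom aNX aNY s -> cplx dX gX j -> cplx dX (s \o gX) j.
Proof. by move=> hs c [|i] hi w /=; [rewrite (c 0%N hi w) (hom_0 hs)| exact: (c i.+1 hi w)]. Qed.

Lemma ker_at_add (X : nat -> zmodType) (NX : zmodType) (aX : forall i, Act (X i))
  (aNX : Act NX) dX (gX : X 0%N -> NX) i (x y : X i) :
  hom (aX 0%N) aNX gX -> (forall i', (i' < i)%N -> hom (aX i'.+1) (aX i') (dX i')) ->
  ker_at dX gX x -> ker_at dX gX y -> ker_at dX gX (x + y).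
Proof.
case: i x y => [|i] x y /= hg hd' kx ky; first by rewrite (homD hg) kx ky addr0.
by rewrite (homD (hd' i _)) // kx ky addr0.
Qed.

Lemma main_abs (n : nat) (N NE : zmodType) (aN : Act N) (aNE : Act NE)
  (sig : N -> NE) (p : NE -> N)
  (E C : nat -> zmodType) (aE : forall i, Act (E i)) (aC : forall i, Act (C i))
  (dE : forall i, E i.+1 -> E i) (eE : E 0%N -> NE)
  (dC : forall i, C i.+1 -> C i) (gC : C 0%N -> N)
  (pi : forall i, E i -> C i) :
  ismod aN -> ismod aNE -> hom aN aNE sig -> hom aNE aN p -> (forall x, p (sig x) = x) ->
  (forall i, (i <= n)%N -> ismod (aE i)) -> (forall i, (i <= n)%N -> FF (aC i)) ->
  (forall i, (i < n)%N -> hom (aE i.+1) (aE i) (dE i)) -> hom (aE 0%N) aNE eE ->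
  (forall i, (i < n)%N -> hom (aC i.+1) (aC i) (dC i)) -> hom (aC 0%N) aN gC ->
  (forall i, (i <= n)%N -> hom (aE i) (aC i) (pi i)) ->
  (forall y, exists x, eE x = y) -> exct dE eE n -> cplx dC gC n ->
  (forall x, gC (pi 0%N x) = p (eE x)) ->
  (forall i, (i < n)%N -> forall x, dC i (pi i.+1 x) = pi i (dE i x)) ->
  exists (Q : nat -> zmodType) (aQ : forall i, Act (Q i))
         (dQ : forall i, Q i.+1 -> Q i) (gQ : Q 0%N -> N),
    [/\ forall i, (i <= n)%N -> FF (aQ i), hom (aQ 0%N) aN gQ,
        forall i, (i < n)%N -> hom (aQ i.+1) (aQ i) (dQ i),
        (forall y, exists x, gQ x = y) & exct dQ gQ n /\ cplx dQ gQ n].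
Proof.
move=> mN mNE hsig hp psig mE FC hdE heE hdC hgC hpi sE eE' cC gpi cpi.
pose Q := Qt C; pose aQ := aQt aC.
have FQ : forall i, (i <= n)%N -> FF (aQ i).
  elim=> [|i IH] hi; first exact: FC.
  by apply: FF_prod; [apply: IH; apply: ltnW| exact: FC].
have mQ : forall i, (i <= n)%N -> ismod (aQ i) by move=> i hi; apply: FF_mod; apply: FQ.
have sg : forall y, exists x, gC x = y.
  move=> y; have [x ex] := sE (sig y); exists (pi 0%N x).
  by rewrite gpi ex psig.
suff: forall k, (k <= n)%N -> exists dQ : forall i, Q i.+1 -> Q i,
    [/\ forall i, (i < k)%N -> hom (aQ i.+1) (aQ i) (dQ i), exct dQ gC k & cplx dQ gC k].
  case/(_ n (leqnn n)) => dQ [h1 h2 h3].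
  by exists Q, aQ, dQ, gC; split.
elim=> [|k IH] hk.
  by exists (fun i (_ : Q i.+1) => (0 : Q i)); split.
have [dQ [hdQ eQ cQ]] := IH (ltnW hk).
have hkn : (k < n)%N := hk.
have hkn' : (k <= n)%N := ltnW hk.
have [al [hal eal cal]] := @compare Q E N NE aQ aE aNE dQ (sig \o gC) dE eE k
  (fun i hi => FQ i (leq_trans hi hkn')) (fun i hi => mE i (leq_trans hi hkn')) mNE hdQ
  (fun i hi => hdE i (leq_trans hi hkn')) heE (hom_comp hgC hsig) (cplx_comp hsig cQ)
  (exct_le hkn' eE') (fun u => sE _).
have [be [hbe ebe cbe]] := @compare C Q N N aC aQ aN dC gC dQ gC k
  (fun i hi => FC i (leq_trans hi hkn')) (fun i hi => mQ i (leq_trans hi hkn')) mN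
  (fun i hi => hdC i (leq_trans hi hkn')) hdQ hgC hgC (cplx_le hkn' cC) eQ
  (fun u => ex_intro _ u erefl).
pose gam := fun i (u : Q i) => be i (pi i (al i u)).
have hgam : forall i, (i <= k)%N -> hom (aQ i) (aQ i) (gam i).
  move=> i hi; exact: (hom_comp (hom_comp (hal i hi) (hpi i (leq_trans hi hkn'))) (hbe i hi)).
have g0 : forall u, gC (gam 0%N u) = gC u.
  by move=> u; rewrite /gam ebe gpi eal psig.
have cg : forall i, (i < k)%N -> forall u, dQ i (gam i.+1 u) = gam i (dQ i u).
  move=> i hi u; rewrite /gam cbe // cpi; last by apply: ltn_trans hi _.
  by rewrite cal.
have [h [hh eh]] := @homotopy Q N aQ aN dQ gC gam k
  (fun i hi => FQ i (leq_trans (ltnW hi) hkn')) (fun i hi => mQ i (leq_trans hi hkn'))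
  hgC hdQ (fun i hi => hgam i (ltnW hi)) cQ eQ g0 cg.
pose psi := fun u : Q k => u - gam k u - hd dQ h u.
pose dk := fun x : Q k.+1 => psi x.1 + be k (dC k x.2).
have mQk : ismod (aQ k) := mQ k hkn'.
have hpsi : hom (aQ k) (aQ k) psi.
  have h1 := hom_sub mQk (hom_id (aQ k)) (hgam k (leqnn k)).
  have h2 : hom (aQ k) (aQ k) (hd dQ h (i:=k)).
    by apply: hd_hom.
  exact: (hom_sub mQk h1 h2).
have hdk : hom (aQ k.+1) (aQ k) dk.
  exact: (hom_add mQk (hom_comp (hom_fst _ _) hpsi)
     (hom_comp (hom_snd _ _) (hom_comp (hdC k hkn) (hbe k (leqnn k))))).
have kpsi : forall u, ker_at dQ gC (psi u).
  by apply: (psi_ker (aX := aQ) hgC).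
have kbe : forall w, ker_at dQ gC (be k (dC k w)).
  move=> w; apply: (@chain_ker C Q N N aC aQ dC gC dQ gC be k hbe _ cbe k (leqnn k)).
    by move=> v e; rewrite ebe.
  exact: cC.
have kdk : forall w, ker_at dQ gC (dk w).
  move=> w; apply: (ker_at_add (aX := aQ) hgC) => //.
have sdk : forall z, ker_at dQ gC z -> exists w, dk w = z.
  move=> z kz.
  have ka : ker_at dE eE (al k z).
    apply: (@chain_ker Q E N NE aQ aE dQ gC dE eE al k hal _ cal k (leqnn k)) => //.
    by move=> v e; rewrite eal /= e (hom_0 hsig).
  have [p0 ep0] := eE' k hkn _ ka.
  exists (z, pi k.+1 p0); rewrite /dk /psi /=.
  rewrite (hd_ker (aX := aQ) (gX := gC)) // subr0.
  by rewrite cpi // ep0 subrK.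
exists (@upd (fun i => Q i.+1 -> Q i) dQ k dk).
have upd_lt : forall i, (i < k)%N -> @upd (fun i => Q i.+1 -> Q i) dQ k dk i = dQ i.
  by move=> i hi; rewrite upd_neq // => e; rewrite e ltnn in hi.
have kerE : forall i (v : Q i), (i <= k)%N ->
    ker_at (@upd (fun i => Q i.+1 -> Q i) dQ k dk) gC v = ker_at dQ gC v.
  by case=> [|i] v //= hi; rewrite upd_lt.
split.
- move=> i hi; case: (eqVneq i k) => [->|ne]; first by rewrite upd_eq.
  have hi' : (i < k)%N.
    by rewrite ltnS leq_eqVlt in hi; case/orP: hi ne => [/eqP->|]; rewrite ?eqxx.
  by rewrite upd_lt //; apply: hdQ.
- move=> i hi v; rewrite kerE; last by rewrite -ltnS.
  case: (eqVneq i k) => [e|ne]; first by subst i; rewrite upd_eq; apply: sdk.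
  have hi' : (i < k)%N.
    by rewrite ltnS leq_eqVlt in hi; case/orP: hi ne => [/eqP->|]; rewrite ?eqxx.
  by rewrite upd_lt //; apply: eQ.
- move=> i hi w; rewrite kerE; last by rewrite -ltnS.
  case: (eqVneq i k) => [e|ne]; first by subst i; rewrite upd_eq; apply: kdk.
  have hi' : (i < k)%N.
    by rewrite ltnS leq_eqVlt in hi; case/orP: hi ne => [/eqP->|]; rewrite ?eqxx.
  by rewrite upd_lt //; apply: cQ.
Qed.

End Abstract.

Lemma add0f (M N : zmodType) (f : M -> N) : (forall x y, f (x + y) = f x + f y) -> f 0 = 0.
Proof.
move=> hf; have := hf 0 0; rewrite addr0 => e.
by apply/eqP; rewrite -(subrr (f 0)) {2}e addrK.
Qed.

Lemma addNf (M N : zmodType) (f : M -> N) : (forall x y, f (x + y) = f x + f y) ->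
  forall x, f (- x) = - f x.
Proof.
move=> hf x; apply/eqP; rewrite -subr_eq0 opprK -hf addNr.
by rewrite (add0f hf).
Qed.

Lemma add_sum (M N : zmodType) (f : M -> N) : (forall x y, f (x + y) = f x + f y) ->
  forall I r (P : pred I) F, f (\sum_(i <- r | P i) F i) = \sum_(i <- r | P i) f (F i).
Proof. by move=> hf I r P F; apply: (big_morph f hf (add0f hf)). Qed.

Section LeftInst.
Variable R : pzRingType.

Definition LAct (M : zmodType) := R -> M -> M.
Definition Lmod (M : zmodType) (a : LAct M) : Prop :=
  [/\ forall r x y, a r (x + y) = a r x + a r y,
      forall r s x, a (r + s) x = a r x + a s x,
      forall r s x, a (r * s) x = a r (a s x) & forall x, a 1 x = x].
Definition Lhom (M N : zmodType) (aM : LAct M) (aN : LAct N) (f : M -> N) :=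
  left_linear aM aN f.
Definition LFF (M : zmodType) (a : LAct M) : Prop :=
  Lmod a /\ exists r (phi : M -> 'rV[R]_r) (phi' : 'rV[R]_r -> M),
    [/\ left_linear a *:%R phi, left_linear *:%R a phi', cancel phi phi' & cancel phi' phi].
Definition LactP (M1 M2 : zmodType) (a1 : LAct M1) (a2 : LAct M2) : LAct (M1 * M2)%type :=
  fun r x => (a1 r x.1, a2 r x.2).

Lemma Lmod_sum M (a : LAct M) : Lmod a -> forall r I s (P : pred I) F,
  a r (\sum_(i <- s | P i) F i) = \sum_(i <- s | P i) a r (F i).
Proof. by case=> h1 _ _ _ r; apply: add_sum. Qed.

Lemma LhomD M N (aM : LAct M) (aN : LAct N) f : Lhom aM aN f -> forall x y, f (x + y) = f x + f y.
Proof. by case. Qed.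
Lemma Lhom_id M (aM : LAct M) : Lhom aM aM id.
Proof. by []. Qed.
Lemma Lhom_comp M N P (aM : LAct M) (aN : LAct N) (aP : LAct P) f g :
  Lhom aM aN f -> Lhom aN aP g -> Lhom aM aP (g \o f).
Proof. by move=> [f1 f2] [g1 g2]; split=> * /=; rewrite ?f1 ?g1 ?f2 ?g2. Qed.
Lemma Lhom_add M N (aM : LAct M) (aN : LAct N) f g : Lmod aN ->
  Lhom aM aN f -> Lhom aM aN g -> Lhom aM aN (fun x => f x + g x).
Proof.
move=> [m1 _ _ _] [f1 f2] [g1 g2]; split=> *; first by rewrite f1 g1 addrACA.
by rewrite f2 g2 m1.
Qed.
Lemma Lhom_opp M N (aM : LAct M) (aN : LAct N) f : Lmod aN ->
  Lhom aM aN f -> Lhom aM aN (fun x => - f x).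
Proof.
move=> [m1 _ _ _] [f1 f2]; split=> *; first by rewrite f1 opprD.
by rewrite f2 (addNf (m1 _)).
Qed.
Lemma Lhom0 M N (aM : LAct M) (aN : LAct N) : Lmod aN -> Lhom aM aN (fun _ => 0).
Proof. by move=> [m1 _ _ _]; split=> *; rewrite ?addr0 ?(add0f (m1 _)). Qed.
Lemma LFF_mod M (a : LAct M) : LFF a -> Lmod a.
Proof. by case. Qed.

Lemma LFF_proj F X Y (aF : LAct F) (aX : LAct X) (aY : LAct Y) s f :
  LFF aF -> Lmod aX -> Lmod aY -> Lhom aX aY s -> Lhom aF aY f ->
  (forall u, exists x, s x = f u) ->
  exists a, Lhom aF aX a /\ forall u, s (a u) = f u.
Proof.
move=> [mF [r [phi [phi' [hp hp' c1 c2]]]]] mX mY [s1 s2] [f1 f2] hs.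
have [xs exs] := fin_all_exists (fun j : 'I_r => hs (phi' 'e_j)).
exists (fun u => \sum_j aX (phi u 0 j) (xs j)); split.
- have [mX1 mX2 mX3 mX4] := mX.
  split.
    move=> x y; rewrite -big_split /=; apply: eq_bigr => j _.
    by rewrite (proj1 hp) mxE mX2.
  move=> c x; rewrite (Lmod_sum mX); apply: eq_bigr => j _.
  by rewrite (proj2 hp) mxE mX3.
- move=> u; rewrite (add_sum s1); under eq_bigr => j _ do rewrite s2 exs -f2.
  rewrite -(add_sum f1); congr f.
  rewrite -{2}(c1 u) {2}(row_sum_delta (phi u)) (add_sum (proj1 hp')).
  by apply: eq_bigr => j _; rewrite (proj2 hp').
Qed.

Lemma LFF_prod M1 M2 (a1 : LAct M1) (a2 : LAct M2) :
  LFF a1 -> LFF a2 -> LFF (LactP a1 a2).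
Proof.
move=> [[m1 m2 m3 m4] [r1 [p1 [q1 [hp1 hq1 c1 d1]]]]] [[n1 n2 n3 n4] [r2 [p2 [q2 [hp2 hq2 c2 d2]]]]].
split.
  split=> *; rewrite /LactP /=; by rewrite ?m1 ?n1 ?m2 ?n2 ?m3 ?n3 ?m4 ?n4 -?surjective_pairing.
exists (r1 + r2)%N, (fun x => row_mx (p1 x.1) (p2 x.2)),
  (fun v => (q1 (lsubmx v), q2 (rsubmx v))); split.
- split=> [x y|c x] /=; first by rewrite (proj1 hp1) (proj1 hp2) add_row_mx.
  by rewrite /LactP /= (proj2 hp1) (proj2 hp2) scale_row_mx.
- split=> [x y|c x] /=; first by rewrite !linearD /= (proj1 hq1) (proj1 hq2).
  by rewrite /LactP /= !linearZ /= (proj2 hq1) (proj2 hq2).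
- by move=> [x y] /=; rewrite row_mxKl row_mxKr c1 c2.
- by move=> v /=; rewrite d1 d2 hsubmxK.
Qed.

Lemma Lhom_fst M1 M2 (a1 : LAct M1) (a2 : LAct M2) : Lhom (LactP a1 a2) a1 fst.
Proof. by []. Qed.
Lemma Lhom_snd M1 M2 (a1 : LAct M1) (a2 : LAct M2) : Lhom (LactP a1 a2) a2 snd.
Proof. by []. Qed.

End LeftInst.

Section LeftMain.
Variable R : pzRingType.
Definition Lmain := @main_abs (@LAct R) (@Lmod R) (@Lhom R) (@LFF R) (@LactP R)
  (@LhomD R) (@Lhom_id R) (@Lhom_comp R) (@Lhom_add R) (@Lhom_opp R) (@Lhom0 R)
  (@LFF_mod R) (@LFF_proj R) (@LFF_prod R) (@Lhom_fst R) (@Lhom_snd R).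
End LeftMain.

Lemma L_out (R : pzRingType) n (N : zmodType) (act : R -> N -> N) (Q : nat -> zmodType)
  (aQ : forall i, LAct R (Q i)) (dQ : forall i, Q i.+1 -> Q i) (gQ : Q 0%N -> N) :
  (forall i, (i <= n)%N -> LFF (aQ i)) -> Lhom (aQ 0%N) act gQ ->
  (forall i, (i < n)%N -> Lhom (aQ i.+1) (aQ i) (dQ i)) ->
  (forall y, exists x, gQ x = y) -> exct dQ gQ n -> cplx dQ gQ n ->
  left_FPn n act.
Proof.
move=> FQ hg hd sg eQ cQ.
have H : forall i, {x : {r : nat & ((Q i -> 'rV[R]_r) * ('rV[R]_r -> Q i))%type} |
   (i <= n)%N -> [/\ left_linear (aQ i) *:%R (projT2 x).1, left_linear *:%R (aQ i) (projT2 x).2,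
        cancel (projT2 x).1 (projT2 x).2 & cancel (projT2 x).2 (projT2 x).1]}.
  move=> i; apply: constructive_indefinite_description.
  case: (leqP i n) => hi.
    have [_ [r [phi [phi' [h1 h2 h3 h4]]]]] := FQ i hi.
    by exists (existT _ r (phi, phi')).
  by exists (existT _ 0%N ((fun _ => 0), (fun _ => 0))).
pose m i := projT1 (sval (H i)).
pose phi i : Q i -> 'rV[R]_(m i) := (projT2 (sval (H i))).1.
pose phi' i : 'rV[R]_(m i) -> Q i := (projT2 (sval (H i))).2.
have P i : (i <= n)%N -> [/\ left_linear (aQ i) *:%R (phi i), left_linear *:%R (aQ i) (phi' i),
        cancel (phi i) (phi' i) & cancel (phi' i) (phi i)].
  by move=> hi; apply: (svalP (H i)).
have n0 : (0 <= n)%N by [].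
exists m, (fun i v => phi i (dQ i (phi' i.+1 v))), (fun v => gQ (phi' 0%N v)).
have [p1 p2 p3 p4] := P 0%N n0.
split.
- exact: Lhom_comp p2 hg.
- move=> i hi; have [q1 q2 q3 q4] := P i (ltnW hi); have [r1 r2 r3 r4] := P i.+1 hi.
  exact: Lhom_comp (Lhom_comp r2 (hd i hi)) q1.
- by move=> y; have [x <-] := sg y; exists (phi 0%N x); rewrite p3.
- move=> hn v; split.
    move=> gv; have [w ew] := eQ 0%N hn _ gv.
    have [r1 r2 r3 r4] := P 1%N hn.
    by exists (phi 1%N w); rewrite r3 ew p4.
  move=> [w <-]; rewrite p3; exact: (cQ 0%N hn).
- move=> i hi v; have [q1 q2 q3 q4] := P i.+1 (ltnW hi); have [r1 r2 r3 r4] := P i.+2 hi.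
  have [s1 s2 s3 s4] := P i (ltnW (ltnW hi)).
  split.
    move=> e; have e' : dQ i (phi' i.+1 v) = 0.
      by rewrite -(s3 (dQ i _)) e (add0f (proj1 s2)).
    have [w ew] := eQ i.+1 hi _ e'.
    by exists (phi i.+2 w); rewrite r3 ew q4.
  move=> [w <-]; rewrite q3 (cQ i.+1 hi); exact: (add0f (proj1 s1)).
Qed.

Lemma left_retract (RA RD : pzRingType) (kap : RA -> RD) (the : RD -> RA) n
  (N : zmodType) (actD : RD -> N -> N) (actA : RA -> N -> N) :
  (forall x y, kap (x + y) = kap x + kap y) -> (forall x y, kap (x * y) = kap x * kap y) ->
  (forall x y, the (x + y) = the x + the y) -> (forall x y, the (x * y) = the x * the y) ->
  the 1 = 1 -> (forall x, kap (the x) = x) ->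
  Lmod actD -> (forall a x, actA a x = actD (kap a) x) ->
  left_FPn n actA -> left_FPn n actD.
Proof.
move=> kD kM tD tM t1 kt mD eA [m [d [g [hg hd sg e0 ei]]]].
have [mD1 mD2 mD3 mD4] := mD.
pose E := fun i => ('rV[RA]_(m i) : zmodType).
pose C := fun i => ('rV[RD]_(m i) : zmodType).
pose aE := fun i (r : RD) (v : E i) => the r *: v.
pose aC := fun i (r : RD) (v : C i) => r *: v.
pose pi := fun i (v : E i) => (map_mx kap v : C i).
pose dC := fun i (w : C i.+1) => (\sum_j w 0 j *: pi i (d i 'e_j) : C i).
pose gC := fun w : C 0%N => \sum_j actD (w 0 j) (g 'e_j).
have k0 : kap 0 = 0 := add0f kD.
have kS : forall I r (P : pred I) F, kap (\sum_(i <- r | P i) F i) = \sum_(i <- r | P i) kap (F i).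
  exact: add_sum.
have piD : forall i (x y : E i), pi i (x + y) = pi i x + pi i y.
  by move=> i x y; apply/rowP => j; rewrite !mxE kD.
have piZ : forall i (a : RA) (x : E i), pi i (a *: x) = kap a *: pi i x.
  by move=> i a x; apply/rowP => j; rewrite !mxE kM.
have piS : forall i I r (P : pred I) F, pi i (\sum_(k <- r | P k) F k) = \sum_(k <- r | P k) pi i (F k).
  by move=> i; apply: add_sum.
have pit : forall i (w : C i), pi i (map_mx the w) = w.
  by move=> i w; apply/rowP => j; rewrite !mxE kt.
have gpi : forall x, gC (pi 0%N x) = g x.
  move=> x; rewrite {2}(row_sum_delta x) (add_sum (proj1 hg)) /gC.
  by apply: eq_bigr => j _; rewrite (proj2 hg) eA mxE.
have cpi : forall i, (i < n)%N -> forall x, dC i (pi i.+1 x) = pi i (d i x).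
  move=> i hi x; rewrite {2}(row_sum_delta x) (add_sum (proj1 (hd i hi))) piS /dC.
  by apply: eq_bigr => j _; rewrite (proj2 (hd i hi)) piZ mxE.
have mE : forall i, Lmod (aE i).
  move=> i; split=> *; rewrite /aE ?scalerDr ?tD ?scalerDl ?tM ?scalerA ?t1 ?scale1r //.
have mC : forall i, Lmod (aC i).
  by move=> i; split=> *; rewrite /aC ?scalerDr ?scalerDl ?scalerA ?scale1r.
have FC : forall i, LFF (aC i).
  move=> i; split=> //; exists (m i), id, id; split=> //.
have := @Lmain RD n N N actD actD id id E C aE aC d g dC gC pi mD mD (Lhom_id _) (Lhom_id _)
  (fun _ => erefl) (fun i _ => mE i) (fun i _ => FC i).
case.
- move=> i hi; split=> [x y|r x]; first exact: (proj1 (hd i hi)).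
  exact: (proj2 (hd i hi)).
- split=> [x y|r x]; first exact: (proj1 hg).
  by rewrite /aE (proj2 hg) eA kt.
- move=> i hi; split=> [x y|r x].
    rewrite /dC -big_split /=; apply: eq_bigr => j _; by rewrite mxE scalerDl.
  rewrite /dC /aC scaler_sumr; apply: eq_bigr => j _; by rewrite mxE scalerA.
- split=> [x y|r x].
    rewrite /gC -big_split /=; apply: eq_bigr => j _; by rewrite mxE mD2.
  rewrite /gC (Lmod_sum mD); apply: eq_bigr => j _; by rewrite mxE mD3.
- move=> i hi; split=> [x y|r x]; first exact: piD.
  by rewrite /aE piZ kt.
- exact: sg.
- move=> [|i] hi v /= kv.
    by have /(_ v) [h1 _] := e0 hi; apply: h1.
  by have /(_ v) [h1 _] := ei i hi; apply: h1.
- move=> [|i] hi w /=.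
    rewrite -(pit 1%N w) cpi // gpi; have /(_ (d 0%N (map_mx the w))) [_ h2] := e0 hi.
    by apply: h2; exists (map_mx the w).
  rewrite -(pit i.+2 w) cpi // cpi; last by apply: ltnW.
  have /(_ (d i.+1 (map_mx the w))) [_ h2] := ei i hi.
  rewrite h2; last by exists (map_mx the w).
  by apply/rowP => j; rewrite !mxE k0.
- exact: gpi.
- exact: cpi.
- move=> Q [aQ [dQ [gQ [h1 h2 h3 h4 [h5 h6]]]]].
  exact: (L_out h1 h2 h3 h4 h5 h6).
Qed.

Section BiInst.
Variables (K : comNzRingType) (D : algType K).

Definition BAct (M : zmodType) := ((D -> M -> M) * (M -> D -> M))%type.
Definition Bmod (M : zmodType) (a : BAct M) : Prop := is_bimodule a.1 a.2.
Definition Bhom (M N : zmodType) (aM : BAct M) (aN : BAct N) (f : M -> N) :=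
  bimod_hom aM.1 aM.2 aN.1 aN.2 f.
Definition BFF (M : zmodType) (a : BAct M) : Prop := exists rk, free_bimodule a.1 a.2 rk.
Definition BactP (M1 M2 : zmodType) (a1 : BAct M1) (a2 : BAct M2) : BAct (M1 * M2)%type :=
  (fun d x => (a1.1 d x.1, a2.1 d x.2), fun x d => (a1.2 x.1 d, a2.2 x.2 d)).

Lemma BhomD M N (aM : BAct M) (aN : BAct N) f : Bhom aM aN f -> forall x y, f (x + y) = f x + f y.
Proof. by case. Qed.
Lemma Bhom_id M (aM : BAct M) : Bhom aM aM id.
Proof. by []. Qed.
Lemma Bhom_comp M N P (aM : BAct M) (aN : BAct N) (aP : BAct P) f g :
  Bhom aM aN f -> Bhom aN aP g -> Bhom aM aP (g \o f).
Proof. by move=> [f1 f2 f3] [g1 g2 g3]; split=> * /=; rewrite ?f1 ?g1 ?f2 ?g2 ?f3 ?g3. Qed.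
Lemma Bhom_add M N (aM : BAct M) (aN : BAct N) f g : Bmod aN ->
  Bhom aM aN f -> Bhom aM aN g -> Bhom aM aN (fun x => f x + g x).
Proof.
move=> [[l1 _] [[r1 _] _]] [f1 f2 f3] [g1 g2 g3]; split=> *.
- by rewrite f1 g1 addrACA.
- by rewrite f2 g2 l1.
- by rewrite f3 g3 r1.
Qed.
Lemma Bhom_opp M N (aM : BAct M) (aN : BAct N) f : Bmod aN ->
  Bhom aM aN f -> Bhom aM aN (fun x => - f x).
Proof.
move=> [[l1 _] [[r1 _] _]] [f1 f2 f3]; split=> *.
- by rewrite f1 opprD.
- by rewrite f2 (addNf (l1 _)).
- by rewrite f3 (addNf (fun x y => r1 _ x y)).
Qed.
Lemma Bhom0 M N (aM : BAct M) (aN : BAct N) : Bmod aN -> Bhom aM aN (fun _ => 0).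
Proof.
move=> [[l1 _] [[r1 _] _]]; split=> *; first by rewrite addr0.
  by rewrite (add0f (l1 _)).
by rewrite (add0f (fun x y => r1 _ x y)).
Qed.
Lemma BFF_mod M (a : BAct M) : BFF a -> Bmod a.
Proof. by case=> rk []. Qed.

Lemma free_uniq (M : zmodType) (a : BAct M) rk (e : 'I_rk -> M) :
  (forall (N : zmodType) (lN : D -> N -> N) (rN : N -> D -> N),
      is_bimodule lN rN ->
      forall nv : 'I_rk -> N,
        exists f : M -> N,
          [/\ bimod_hom a.1 a.2 lN rN f,
              (forall i, f (e i) = nv i) &
              (forall f' : M -> N, bimod_hom a.1 a.2 lN rN f' ->
                 (forall i, f' (e i) = nv i) -> forall x, f' x = f x)]) ->
  forall N (aN : BAct N) f g, Bmod aN -> Bhom a aN f -> Bhom a aN g ->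
  (forall i, f (e i) = g (e i)) -> forall x, f x = g x.
Proof.
move=> U N aN f g mN hf hg efg x.
have [f0 [_ _ u]] := U N aN.1 aN.2 mN (fun i => g (e i)).
by rewrite (u f hf efg) (u g hg (fun i => erefl)).
Qed.

Lemma BFF_proj F X Y (aF : BAct F) (aX : BAct X) (aY : BAct Y) s f :
  BFF aF -> Bmod aX -> Bmod aY -> Bhom aX aY s -> Bhom aF aY f ->
  (forall u, exists x, s x = f u) ->
  exists a, Bhom aF aX a /\ forall u, s (a u) = f u.
Proof.
move=> [rk [mF [e U]]] mX mY hs hf ex.
have [xs exs] := fin_all_exists (fun j : 'I_rk => ex (e j)).
have [a [ha ea _]] := U X aX.1 aX.2 mX xs.
exists a; split=> // u.
apply: (free_uniq U mY (Bhom_comp ha hs) hf) => i /=.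
by rewrite ea exs.
Qed.

Lemma Bmod_prod M1 M2 (a1 : BAct M1) (a2 : BAct M2) :
  Bmod a1 -> Bmod a2 -> Bmod (BactP a1 a2).
Proof.
move=> [[l1 [l2 [l3 l4]]] [[r1 [r2 [r3 r4]]] [c1 c2]]]
       [[m1 [m2 [m3 m4]]] [[s1 [s2 [s3 s4]]] [d1 d2]]].
rewrite /Bmod /BactP /=.
do !split=> *; by rewrite /= ?l1 ?l2 ?l3 ?l4 ?r1 ?r2 ?r3 ?r4 ?c1 ?c2
   ?m1 ?m2 ?m3 ?m4 ?s1 ?s2 ?s3 ?s4 ?d1 ?d2 -?surjective_pairing.
Qed.

Lemma BFF_prod M1 M2 (a1 : BAct M1) (a2 : BAct M2) :
  BFF a1 -> BFF a2 -> BFF (BactP a1 a2).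
Proof.
move=> [rk1 [mo1 [e1 U1]]] [rk2 [mo2 [e2 U2]]].
exists (rk1 + rk2)%N; split; first exact: Bmod_prod.
pose e := fun i : 'I_(rk1 + rk2) =>
  match split i with inl j => (e1 j, 0 : M2) | inr j => (0 : M1, e2 j) end.
exists e => N lN rN mN nv.
have [[n1 _] [[n1' _] _]] := mN.
have [f1 [hf1 ef1 u1]] := U1 N lN rN mN (fun j => nv (lshift rk2 j)).
have [f2 [hf2 ef2 u2]] := U2 N lN rN mN (fun j => nv (rshift rk1 j)).
have [[o1 _] [[o1' _] _]] := mo1.
have [[p1 _] [[p1' _] _]] := mo2.
have sl : forall j, e (lshift rk2 j) = (e1 j, 0).
  by move=> j; rewrite /e (unsplitK (inl _ j) : split (lshift rk2 j) = inl j).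
have sr : forall j, e (rshift rk1 j) = (0, e2 j).
  by move=> j; rewrite /e (unsplitK (inr _ j) : split (rshift rk1 j) = inr j).
have [h1 h2 h3] := hf1; have [k1 k2 k3] := hf2.
exists (fun x => f1 x.1 + f2 x.2); split.
- split=> * /=.
  + by rewrite h1 k1 addrACA.
  + by rewrite h2 k2 n1.
  + by rewrite h3 k3 n1'.
- move=> i; rewrite -(splitK i); case: (split i) => j /=; rewrite ?sl ?sr /=.
    by rewrite ef1 (add0f k1) addr0.
  by rewrite ef2 (add0f h1) add0r.
- move=> f' [g1 g2 g3] ef' [x1 x2] /=.
  have -> : f' (x1, x2) = f' (x1, 0) + f' (0, x2).
    by rewrite -g1; congr f'; congr pair; rewrite ?addr0 ?add0r.
  congr (_ + _).
  + apply: (u1 (fun y => f' (y, 0))).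
    * split=> [x y|a x|x a] /=.
      -- by rewrite -g1; congr f'; congr pair; rewrite addr0.
      -- by rewrite -g2 /BactP /= (add0f (p1 _)).
      -- by rewrite -g3 /BactP /= (add0f (fun x y => p1' _ x y)).
    * by move=> j; rewrite -sl ef'.
  + apply: (u2 (fun y => f' (0, y))).
    * split=> [x y|a x|x a] /=.
      -- by rewrite -g1; congr f'; congr pair; rewrite addr0.
      -- by rewrite -g2 /BactP /= (add0f (o1 _)).
      -- by rewrite -g3 /BactP /= (add0f (fun x y => o1' _ x y)).
    * by move=> j; rewrite -sr ef'.
Qed.

Lemma Bhom_fst M1 M2 (a1 : BAct M1) (a2 : BAct M2) : Bhom (BactP a1 a2) a1 fst.
Proof. by []. Qed.
Lemma Bhom_snd M1 M2 (a1 : BAct M1) (a2 : BAct M2) : Bhom (BactP a1 a2) a2 snd.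
Proof. by []. Qed.

End BiInst.

Section BiMain.
Variables (K : comNzRingType) (D : algType K).
Definition Bmain := @main_abs (@BAct K D) (@Bmod K D) (@Bhom K D) (@BFF K D) (@BactP K D)
  (@BhomD K D) (@Bhom_id K D) (@Bhom_comp K D) (@Bhom_add K D) (@Bhom_opp K D) (@Bhom0 K D)
  (@BFF_mod K D) (@BFF_proj K D) (@BFF_prod K D) (@Bhom_fst K D) (@Bhom_snd K D).
End BiMain.

Section FDtype.
Variable F : zmodType.
Variable T : {additive F -> F}.
Definition fixp := [pred x | T x == x].
Lemma fixp_closed : zmod_closed fixp.
Proof. split; first by rewrite inE raddf0. by move=> x y; rewrite !inE raddfB => /eqP-> /eqP->. Qed.
HB.instance Definition _ := GRing.isZmodClosed.Build F fixp fixp_closed.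
Record FDt := MkFD { fdval : F; fdP : fdval \in fixp }.
HB.instance Definition _ := [isSub for fdval].
HB.instance Definition _ := [Choice of FDt by <:].
HB.instance Definition _ := [SubChoice_isSubZmodule of FDt by <:].
Hypothesis TT : forall x, T (T x) = T x.
Lemma T_proof x : T x \in fixp.
Proof. by rewrite inE TT. Qed.
Definition projT x : FDt := MkFD (T_proof x).
End FDtype.

Section FDsec.
Variables (K : comNzRingType) (A D : algType K).
Variables (kappa : {lrmorphism A -> D}) (theta : {lrmorphism D -> A}).
Hypothesis kt : forall x, kappa (theta x) = x.
Variables (F : zmodType) (lF : A -> F -> F) (rF : F -> A -> F) (rk : nat).
Variables (e : 'I_rk -> F) (T : {additive F -> F}).
Hypothesis mF : is_bimodule lF rF.
Hypothesis U : forall (N : zmodType) (lN : A -> N -> N) (rN : N -> A -> N),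
      is_bimodule lN rN ->
      forall nv : 'I_rk -> N,
        exists f : F -> N,
          [/\ bimod_hom lF rF lN rN f,
              (forall i, f (e i) = nv i) &
              (forall f' : F -> N, bimod_hom lF rF lN rN f' ->
                 (forall i, f' (e i) = nv i) -> forall x, f' x = f x)].
Hypothesis Tl : forall a x, T (lF a x) = lF (theta (kappa a)) (T x).
Hypothesis Tr : forall a x, T (rF x a) = rF (T x) (theta (kappa a)).
Hypothesis Te : forall i, T (e i) = e i.
Hypothesis TT : forall x, T (T x) = T x.

Definition lD d (y : FDt T) : FDt T := projT TT (lF (theta d) (fdval y)).
Definition rD (y : FDt T) d : FDt T := projT TT (rF (fdval y) (theta d)).
Arguments lD d y : simpl never.
Arguments rD y d : simpl never.
Lemma lDv d y : fdval (lD d y) = lF (theta d) (fdval y).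
Proof. by rewrite /lD /= Tl kt (eqP (fdP y)). Qed.
Lemma rDv d y : fdval (rD y d) = rF (fdval y) (theta d).
Proof. by rewrite /rD /= Tr kt (eqP (fdP y)). Qed.

Lemma theta_alg (k : K) : theta k%:A = k%:A.
Proof. exact: rmorph_alg. Qed.
Lemma kappa_alg (k : K) : kappa k%:A = k%:A.
Proof. exact: rmorph_alg. Qed.

Lemma fT (y : FDt T) : T (fdval y) = fdval y.
Proof. by rewrite (eqP (fdP y)). Qed.

Lemma FD_free : free_bimodule lD rD rk.
Proof.
have [[l1 [l2 [l3 l4]]] [[r1 [r2 [r3 r4]]] [c1 c2]]] := mF.
split.
  (do !split); intros; apply: val_inj => /=; rewrite ?Tl ?Tr ?kt ?raddfD ?fT ?TT ?Tl ?Tr ?kt ?raddfD ?fT ?TT ?Tl ?Tr ?kt ?fT ?TT;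
  by rewrite ?l1 ?l2 ?l3 ?l4 ?r1 ?r2 ?r3 ?r4 ?c1 ?c2 ?rmorphD ?rmorphM ?rmorph1 ?theta_alg.
exists (fun i => projT TT (e i)) => N lN rN mN nv.
have [[n1 [n2 [n3 n4]]] [[s1 [s2 [s3 s4]]] [d1 d2]]] := mN.
have mN' : is_bimodule (fun a y => lN (kappa a) y) (fun y a => rN y (kappa a)).
  (do !split); intros;
  by rewrite ?n1 ?n2 ?n3 ?n4 ?s1 ?s2 ?s3 ?s4 ?d1 ?d2 ?rmorphD ?rmorphM ?rmorph1 ?kappa_alg.
have [fA [[h1 h2 h3] hfe uf]] := U mN' nv.
exists (fun y => fA (fdval y)); split.
- split=> [x y|d y|y d] /=; first by rewrite h1.
    by rewrite ?Tl ?Tr ?kt ?fT ?TT ?Tl ?Tr ?kt ?fT ?TT h2 kt.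
  by rewrite ?Tl ?Tr ?kt ?fT ?TT ?Tl ?Tr ?kt ?fT ?TT h3 kt.
- by move=> i /=; rewrite Te hfe.
- move=> f' [g1 g2 g3] ef' y.
  have -> : f' y = f' (projT TT (fdval y)).
    by congr f'; apply: val_inj => /=; rewrite (eqP (fdP y)).
  apply: (uf (fun x => f' (projT TT x))).
    split=> [x z|a x|x a] /=.
    + by rewrite -g1; congr f'; apply: val_inj => /=; rewrite raddfD.
    + rewrite -g2; congr f'; apply: val_inj => /=; by rewrite ?Tl ?Tr ?kt ?fT ?TT ?Tl ?Tr ?kt ?fT ?TT.
    + rewrite -g3; congr f'; apply: val_inj => /=; by rewrite ?Tl ?Tr ?kt ?fT ?TT ?Tl ?Tr ?kt ?fT ?TT.
  by move=> i; rewrite -ef'.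
Qed.

End FDsec.

Lemma restr_mod (K : comNzRingType) (R1 R2 : algType K) (phi : R1 -> R2)
  (M : zmodType) (l : R2 -> M -> M) (r : M -> R2 -> M) :
  (forall x y, phi (x + y) = phi x + phi y) -> (forall x y, phi (x * y) = phi x * phi y) ->
  phi 1 = 1 -> (forall k : K, phi k%:A = k%:A) ->
  is_bimodule l r -> is_bimodule (fun a x => l (phi a) x) (fun x a => r x (phi a)).
Proof.
move=> pD pM p1 pA [[l1 [l2 [l3 l4]]] [[r1 [r2 [r3 r4]]] [c1 c2]]].
by (do !split); intros; rewrite ?pD ?pM ?p1 ?pA ?l1 ?l2 ?l3 ?l4 ?r1 ?r2 ?r3 ?r4 ?c1 ?c2.
Qed.

Definition mkAdd (F : zmodType) (f : F -> F) (h : forall x y, f (x - y) = f x - f y) :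
  {additive F -> F} := HB.pack f (GRing.isZmodMorphism.Build _ _ f h).

Lemma T_exists (K : comNzRingType) (A D : algType K)
  (kappa : {lrmorphism A -> D}) (theta : {lrmorphism D -> A})
  (kt : forall x, kappa (theta x) = x)
  (F : zmodType) (lF : A -> F -> F) (rF : F -> A -> F) rk :
  free_bimodule lF rF rk ->
  exists T : {additive F -> F}, (forall x, T (T x) = T x) /\
   exists e : 'I_rk -> F,
     [/\ is_bimodule lF rF,
         (forall (N : zmodType) (lN : A -> N -> N) (rN : N -> A -> N),
           is_bimodule lN rN ->
           forall nv : 'I_rk -> N,
             exists f : F -> N,
               [/\ bimod_hom lF rF lN rN f,
                   (forall i, f (e i) = nv i) &
                   (forall f' : F -> N, bimod_hom lF rF lN rN f' ->
                      (forall i, f' (e i) = nv i) -> forall x, f' x = f x)]),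
         (forall a x, T (lF a x) = lF (theta (kappa a)) (T x)),
         (forall a x, T (rF x a) = rF (T x) (theta (kappa a))) &
         (forall i, T (e i) = e i)].
Proof.
case=> mF [e U].
pose tau a := theta (kappa a).
have tD : forall x y, tau (x + y) = tau x + tau y by move=> x y; rewrite /tau !rmorphD.
have tM : forall x y, tau (x * y) = tau x * tau y by move=> x y; rewrite /tau !rmorphM.
have t1 : tau 1 = 1 by rewrite /tau !rmorph1.
have tA : forall k : K, tau k%:A = k%:A by move=> k; rewrite /tau !rmorph_alg.
have tt : forall a, tau (tau a) = tau a by move=> a; rewrite /tau kt.
have mT := restr_mod tD tM t1 tA mF.
have [T0 [[h1 h2 h3] he _]] := U F _ _ mT e.
have hB : forall x y, T0 (x - y) = T0 x - T0 y by move=> x y; rewrite h1 (addNf h1).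
exists (mkAdd hB); split; last by exists e; split.
move=> x /=.
have := @free_uniq K A F (lF, rF) rk e U F (fun a x => lF (tau a) x, fun x a => rF x (tau a))
   (fun x => T0 (T0 x)) T0 mT.
apply.
- split=> [y z|a y|y a] /=; first by rewrite !h1.
    by rewrite h2 h2 tt.
  by rewrite h3 h3 tt.
- by split.
- by move=> i /=; rewrite !he.
Qed.

Lemma B_out (K : comNzRingType) (D : algType K) n (N : zmodType)
  (lN : D -> N -> N) (rN : N -> D -> N) (Q : nat -> zmodType)
  (aQ : forall i, BAct D (Q i)) (dQ : forall i, Q i.+1 -> Q i) (gQ : Q 0%N -> N) :
  (forall i, (i <= n)%N -> BFF (aQ i)) -> Bhom (aQ 0%N) (lN, rN) gQ ->
  (forall i, (i < n)%N -> Bhom (aQ i.+1) (aQ i) (dQ i)) ->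
  (forall y, exists x, gQ x = y) -> exct dQ gQ n -> cplx dQ gQ n ->
  bimod_FPn n lN rN.
Proof.
move=> FQ hg hd sg eQ cQ.
exists Q, (fun i => (aQ i).1), (fun i => (aQ i).2), dQ, gQ; split.
  by move=> i hi; have [rk h] := FQ i hi; exists rk.
split=> //.
- move=> hn v; split; first exact: (eQ 0%N hn).
  by move=> [w <-]; exact: (cQ 0%N hn).
- move=> i hi v; split; first exact: (eQ i.+1 hi).
  by move=> [w <-]; exact: (cQ i.+1 hi).
Qed.

Definition idAdd (F : zmodType) : {additive F -> F} := @mkAdd F id (fun x y => erefl).

Lemma bi_retract (K : comNzRingType) (A D : algType K)
  (kappa : {lrmorphism A -> D}) (theta : {lrmorphism D -> A})
  (kt : forall x, kappa (theta x) = x) n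
  (NA : zmodType) (lA : A -> NA -> NA) (rA : NA -> A -> NA)
  (N : zmodType) (lN : D -> N -> N) (rN : N -> D -> N) (p : NA -> N) (sig : N -> NA) :
  is_bimodule lA rA -> is_bimodule lN rN ->
  (forall x y, p (x + y) = p x + p y) ->
  (forall a x, p (lA a x) = lN (kappa a) (p x)) -> (forall a x, p (rA x a) = rN (p x) (kappa a)) ->
  bimod_hom lN rN (fun d x => lA (theta d) x) (fun x d => rA x (theta d)) sig ->
  (forall y, p (sig y) = y) ->
  bimod_FPn n lA rA -> bimod_FPn n lN rN.
Proof.
move=> mA mN pD pl pr hsig psig [F [lF [rF [d [g [frees [hg hd sg e0 ei]]]]]]].
have thD : forall x y, theta (x + y) = theta x + theta y by move=> x y; rewrite rmorphD.
have thM : forall x y, theta (x * y) = theta x * theta y by move=> x y; rewrite rmorphM.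
have th1 : theta 1 = 1 by rewrite rmorph1.
have thA : forall k : K, theta k%:A = k%:A by move=> k; rewrite rmorph_alg.
have kD : forall x y, kappa (x + y) = kappa x + kappa y by move=> x y; rewrite rmorphD.
have kM : forall x y, kappa (x * y) = kappa x * kappa y by move=> x y; rewrite rmorphM.
have k1 : kappa 1 = 1 by rewrite rmorph1.
have kA : forall k : K, kappa k%:A = k%:A by move=> k; rewrite rmorph_alg.
pose univ i rk (e : 'I_rk -> F i) :=
  forall (N : zmodType) (lN : A -> N -> N) (rN : N -> A -> N),
           is_bimodule lN rN ->
           forall nv : 'I_rk -> N,
             exists f : F i -> N,
               [/\ bimod_hom (lF i) (rF i) lN rN f,
                   (forall i, f (e i) = nv i) &
                   (forall f' : F i -> N, bimod_hom (lF i) (rF i) lN rN f' ->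
                      (forall i, f' (e i) = nv i) -> forall x, f' x = f x)].
have H : forall i, {T : {additive F i -> F i} | (forall x, T (T x) = T x) /\
   ((i <= n)%N -> exists rk (e : 'I_rk -> F i),
     [/\ is_bimodule (lF i) (rF i), univ i rk e,
         (forall a x, T (lF i a x) = lF i (theta (kappa a)) (T x)),
         (forall a x, T (rF i x a) = rF i (T x) (theta (kappa a))) &
         (forall j, T (e j) = e j)])}.
  move=> i; apply: constructive_indefinite_description.
  case: (leqP i n) => hi.
    have [rk fr] := frees i hi.
    have [T [TT [e [m1 m2 m3 m4 m5]]]] := T_exists kt fr.
    by exists T; split=> // _; exists rk, e; split.
  by exists (idAdd (F i)); split.
pose Ti i := sval (H i).
have TTi : forall i x, Ti i (Ti i x) = Ti i x := fun i => (svalP (H i)).1.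
have Pi := fun i => (svalP (H i)).2.
have mFi : forall i, (i <= n)%N -> is_bimodule (lF i) (rF i).
  by move=> i hi; have [rk [e [? ? ? ? ?]]] := Pi i hi.
have TlA : forall i, (i <= n)%N -> forall a x, Ti i (lF i a x) = lF i (theta (kappa a)) (Ti i x).
  by move=> i hi; have [rk [e [? ? ? ? ?]]] := Pi i hi.
have TrA : forall i, (i <= n)%N -> forall a x, Ti i (rF i x a) = rF i (Ti i x) (theta (kappa a)).
  by move=> i hi; have [rk [e [? ? ? ? ?]]] := Pi i hi.
have ktt : forall a, theta (kappa (theta (kappa a))) = theta (kappa a) by move=> a; rewrite kt.
have kkt : forall a, kappa (theta (kappa a)) = kappa a by move=> a; rewrite kt.
have [hg1 hg2 hg3] := hg.
have mNk := restr_mod kD kM k1 kA mN.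
have gT : forall x, p (g (Ti 0%N x)) = p (g x).
  have [rk [e [m1 U m3 m4 Te]]] := Pi 0%N isT.
  move=> x; apply: (@free_uniq K A (F 0%N) (lF 0%N, rF 0%N) rk e U N
     (fun a y => lN (kappa a) y, fun y a => rN y (kappa a))
     (fun y => p (g (Ti 0%N y))) (fun y => p (g y)) mNk).
  - split=> [y z|a y|y a] /=; first by rewrite raddfD hg1 pD.
      by rewrite m3 hg2 pl kkt.
    by rewrite m4 hg3 pr kkt.
  - split=> [y z|a y|y a] /=; first by rewrite hg1 pD.
      by rewrite hg2 pl.
    by rewrite hg3 pr.
  - by move=> j /=; rewrite Te.
have dT : forall i, (i < n)%N -> forall x, Ti i (d i (Ti i.+1 x)) = Ti i (d i x).
  move=> i hi; have [rk [e [m1 U m3 m4 Te]]] := Pi i.+1 hi.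
  have [h1 h2 h3] := hd i hi.
  have Tl := TlA i (ltnW hi); have Tr := TrA i (ltnW hi).
  have tD : forall x y, theta (kappa (x + y)) = theta (kappa x) + theta (kappa y).
    by move=> x y; rewrite !rmorphD.
  have tM : forall x y, theta (kappa (x * y)) = theta (kappa x) * theta (kappa y).
    by move=> x y; rewrite !rmorphM.
  have t1 : theta (kappa 1) = 1 by rewrite !rmorph1.
  have tA : forall k : K, theta (kappa k%:A) = k%:A by move=> k; rewrite !rmorph_alg.
  have mT := restr_mod tD tM t1 tA (mFi i (ltnW hi)).
  move=> x; apply: (@free_uniq K A (F i.+1) (lF i.+1, rF i.+1) rk e U (F i)
     (fun a y => lF i (theta (kappa a)) y, fun y a => rF i y (theta (kappa a)))
     (fun y => Ti i (d i (Ti i.+1 y))) (fun y => Ti i (d i y)) mT).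
  - split=> [y z|a y|y a] /=; first by rewrite !raddfD h1 raddfD.
      by rewrite m3 h2 Tl ktt.
    by rewrite m4 h3 Tr ktt.
  - split=> [y z|a y|y a] /=; first by rewrite h1 raddfD.
      by rewrite h2 Tl.
    by rewrite h3 Tr.
  - by move=> j /=; rewrite Te.
pose C i := (FDt (Ti i) : zmodType).
pose aC : forall i, BAct D (C i) := fun i => (lD theta (lF i) (TTi i), rD theta (rF i) (TTi i)).
pose aE : forall i, BAct D (F i) := fun i => (fun d' x => lF i (theta d') x, fun x d' => rF i x (theta d')).
pose aN : BAct D N := (lN, rN).
pose aNE : BAct D NA := (fun d' x => lA (theta d') x, fun x d' => rA x (theta d')).
pose pi i (x : F i) : C i := projT (TTi i) x.
pose dC i (y : C i.+1) : C i := projT (TTi i) (d i (fdval y)).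
pose gC (y : C 0%N) : N := p (g (fdval y)).
have mAt := restr_mod thD thM th1 thA mA.
have fTi : forall i (y : C i), Ti i (fdval y) = fdval y by move=> i y; exact: fT.
have := @Bmain K D n N NA aN aNE sig p F C aE aC d g dC gC pi mN mAt hsig.
case.
- by split=> [x y|a x|x a] /=; rewrite ?pD ?pl ?pr ?kt.
- exact: psig.
- by move=> i hi; apply: restr_mod => //; apply: mFi.
- move=> i hi; have [rk [e [m1 U m3 m4 Te]]] := Pi i hi.
  by exists rk; apply: (FD_free kt m1 U m3 m4 Te).
- by move=> i hi; have [h1 h2 h3] := hd i hi; split=> * /=; rewrite ?h1 ?h2 ?h3.
- by split=> * /=; rewrite ?hg1 ?hg2 ?hg3.
- move=> i hi; have [h1 h2 h3] := hd i hi.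
  have Tl := TlA i (ltnW hi); have Tr := TrA i (ltnW hi).
  have Tl' := TlA i.+1 hi; have Tr' := TrA i.+1 hi.
  split=> [x y|a x|x a]; apply: val_inj => /=.
  + by rewrite h1 raddfD.
  + by rewrite Tl' kt fTi h2 !Tl !kt TTi.
  + by rewrite Tr' kt fTi h3 !Tr !kt TTi.
- split=> [x y|a x|x a]; rewrite /gC /=.
  + by rewrite hg1 pD.
  + by rewrite (TlA 0%N isT) kt fTi hg2 pl kt.
  + by rewrite (TrA 0%N isT) kt fTi hg3 pr kt.
- move=> i hi; have Tl := TlA i hi; have Tr := TrA i hi.
  split=> [x y|a x|x a]; apply: val_inj => /=.
  + by rewrite raddfD.
  + by rewrite !Tl !kt TTi.
  + by rewrite !Tr !kt TTi.
- exact: sg.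
- move=> [|i] hi v /= kv.
    by have /(_ v) [h1 _] := e0 hi; apply: h1.
  by have /(_ v) [h1 _] := ei i hi; apply: h1.
- move=> [|i] hi w; rewrite /= /gC /dC /=.
    rewrite gT; have /(_ (d 0%N (fdval w))) [_ h2] := e0 hi.
    by rewrite h2; [exact: (add0f pD) | exists (fdval w)].
  apply: val_inj => /=; rewrite dT; last by apply: ltnW.
  have /(_ (d i.+1 (fdval w))) [_ h2] := ei i hi.
  by rewrite h2; [exact: raddf0 | exists (fdval w)].
- by move=> x; rewrite /gC /pi /= gT.
- by move=> i hi x; apply: val_inj; rewrite /dC /pi /= dT.
- move=> Q [aQ [dQ [gQ [h1 h2 h3 h4 [h5 h6]]]]].
  exact: (B_out h1 h2 h3 h4 h5 h6).
Qed.

Lemma left_part (K : comNzRingType) (n : nat) (A D : algType K)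
  (eps : {lrmorphism A -> K^o}) (epsD : {lrmorphism D -> K^o})
  (kappa : {lrmorphism A -> D}) (theta : {lrmorphism D -> A}) :
  (forall x : D, kappa (theta x) = x) ->
  (forall a : A, epsD (kappa a) = eps a) ->
  (leftFPn eps n -> leftFPn epsD n) /\ (rightFPn eps n -> rightFPn epsD n).
Proof.
move=> kt ek; split.
- apply: (@left_retract A D kappa theta n K (fun d k => (epsD d : K) * k) (fun a k => (eps a : K) * k)).
  + exact: rmorphD.
  + exact: rmorphM.
  + exact: rmorphD.
  + exact: rmorphM.
  + exact: rmorph1.
  + exact: kt.
  + split=> *; by rewrite ?mulrDr ?rmorphD ?mulrDl ?rmorphM ?mulrA ?rmorph1 ?mul1r.
  + by move=> a x; rewrite ek.
- apply: (@left_retract A^c D^c kappa theta n K (fun (d : D^c) k => k * (epsD (d : D) : K))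
     (fun (a : A^c) k => k * (eps (a : A) : K))).
  + by move=> x y; exact: (rmorphD kappa x y).
  + by move=> x y; exact: (rmorphM kappa y x).
  + by move=> x y; exact: (rmorphD theta x y).
  + by move=> x y; exact: (rmorphM theta y x).
  + exact: (rmorph1 theta).
  + exact: kt.
  + split=> *; rewrite ?mulrDl ?rmorphD ?mulrDr //=.
    * by rewrite rmorphM mulrA.
    * by rewrite rmorph1 mulr1.
  + by move=> a x; rewrite ek.
Qed.

Lemma mul_bimod (K : comNzRingType) (A : algType K) :
  is_bimodule (fun a x : A => a * x) (fun x b : A => x * b).
Proof.
(do !split); intros; rewrite ?mulrDr ?mulrDl ?mulrA ?mul1r ?mulr1 //.
by rewrite mulr_algl mulr_algr.
Qed.

Lemma eps_bimod (K : comNzRingType) (A : algType K) (eps : {lrmorphism A -> K^o}) :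
  is_bimodule (fun a (k : K) => (eps a : K) * k) (fun (k : K) a => k * (eps a : K)).
Proof.
(do !split); intros; rewrite ?mulrDr ?mulrDl ?rmorphD ?rmorphM ?rmorph1 ?mulrA ?mul1r ?mulr1 //=.
- exact: (@mulrDl K).
- exact: (@mulrDr K).
- exact: (@mulrC K).
Qed.

Unset Implicit Arguments.

Theorem mainTheorem5 (K : comNzRingType) (n : nat) (A D : algType K) :
  (forall (kappa : {lrmorphism A -> D}) (theta : {lrmorphism D -> A}),
     (forall x : D, kappa (theta x) = x) ->
     biFPn A n -> biFPn D n) /\
  (forall (eps : {lrmorphism A -> K^o}) (epsD : {lrmorphism D -> K^o}),
     augmentation eps -> augmentation epsD ->
     forall (kappa : {lrmorphism A -> D}) (theta : {lrmorphism D -> A}),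
       (forall x : D, kappa (theta x) = x) ->
       (forall a : A, epsD (kappa a) = eps a) ->
       [/\ leftFPn eps n -> leftFPn epsD n,
           rightFPn eps n -> rightFPn epsD n &
           weak_biFPn eps n -> weak_biFPn epsD n]).
Proof.
split.
  move=> kappa theta kt.
  apply: (@bi_retract K A D kappa theta kt n A _ _ D _ _ kappa theta (@mul_bimod K A) (@mul_bimod K D)).
  - exact: rmorphD.
  - by move=> *; rewrite rmorphM.
  - by move=> *; rewrite rmorphM.
  - by split=> * /=; rewrite ?rmorphD ?rmorphM.
  - exact: kt.
move=> eps epsD _ _ kappa theta kt ek.
have [h1 h2] := @left_part K n A D eps epsD kappa theta kt ek.
split=> //.
apply: (@bi_retract K A D kappa theta kt n K _ _ K _ _ id id (@eps_bimod K A eps) (@eps_bimod K D epsD)).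
- by [].
- by move=> a x; rewrite ek.
- by move=> a x; rewrite ek.
- by split=> [x y|a x|x a] /=; rewrite -?ek ?kt.
- by [].
Qed.
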